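(* Up to isomorphism, the complex exceptional Lie algebra $\mathfrak{e}_8$ has exactly two pairwise non-isomorphic $|3|$-gradings $\mathfrak{n}_{-3}\oplus\cdots\oplus\mathfrak{n}_3$: for $\Sigma=\{\alpha_2\}$ one has $\dim\mathfrak{n}_{-3}=8$, $\dim\mathfrak{n}_{-2}=28$, $\dim\mathfrak{n}_{-1}=56$; for $\Sigma=\{\alpha_7\}$ one has $\dim\mathfrak{n}_{-3}=2$, $\dim\mathfrak{n}_{-2}=27$, $\dim\mathfrak{n}_{-1}=54$.
   Context: Bourbaki labeling of $\mathfrak{e}_8$: Dynkin diagram the chain $\alpha_1-\alpha_3-\alpha_4-\alpha_5-\alpha_6-\alpha_7-\alpha_8$ with $\alpha_2$ attached to $\alpha_4$; highest root $2\alpha_1+3\alpha_2+4\alpha_3+6\alpha_4+5\alpha_5+4\alpha_6+3\alpha_7+2\alpha_8$. For a root $\alpha=\sum a_l\alpha_l$ and a subset $\Sigma$ of simple roots, $ht_\Sigma(\alpha)=\sum_{\alpha_l\in\Sigma}a_l$; the grading associated to $\Sigma$ is $\mathfrak{n}_m=\bigoplus_{ht_\Sigma(\alpha)=m}\mathfrak{g}_\alpha$ ($m\ne0$), $\mathfrak{n}_0=\mathfrak{h}\oplus\bigoplus_{ht_\Sigma(\alpha)=0}\mathfrak{g}_\alpha$. The $|3|$-gradings are those associated to subsets $\Sigma$ for which the highest root has $\Sigma$-height exactly $3$; isomorphism of gradings means isomorphism of graded Lie algebras. *)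

(* Defs.v *)
From mathcomp Require Import all_boot all_order all_algebra.
Set Implicit Arguments. Unset Strict Implicit. Unset Printing Implicit Defensive.
Import Order.TTheory GRing.Theory Num.Theory.
Local Open Scope ring_scope.

(* Simple root alpha_l (l = 1..8) is the ordinal l-1 : 'I_8. *)
Definition alpha (l : nat) : 'I_8 := inord l.-1.

(* Edges of the Bourbaki E8 Dynkin diagram:
   1-3, 3-4, 4-5, 5-6, 6-7, 7-8, 2-4 (Bourbaki labels). *)
Definition e8_edge (l m : nat) : bool :=
  [|| (l == 1) && (m == 3), (l == 3) && (m == 4), (l == 4) && (m == 5),
      (l == 5) && (m == 6), (l == 6) && (m == 7), (l == 7) && (m == 8)
    | (l == 2) && (m == 4)]%N.

Definition cartan (i j : 'I_8) : int :=
  if i == j then 2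
  else if e8_edge i.+1 j.+1 || e8_edge j.+1 i.+1 then -1 else 0.

(* A vector of the root lattice, in coordinates w.r.t. the simple roots. *)
Definition rvec := {ffun 'I_8 -> int}.

Definition simple_root (i : 'I_8) : rvec := [ffun j => if j == i then 1 else 0].

Definition refl (i : 'I_8) (v : rvec) : rvec :=
  [ffun j => if j == i then v j - \sum_(k < 8) v k * cartan k i else v j].

Inductive IsRoot : rvec -> Prop :=
| root_simple : forall i, IsRoot (simple_root i)
| root_refl : forall i v, IsRoot v -> IsRoot (refl i v).

Definition highest_root : rvec :=
  [ffun j : 'I_8 => nth 0 [:: 2; 3; 4; 6; 5; 4; 3; 2] j].

Definition htS (S : {set 'I_8}) (v : rvec) : int := \sum_(l in S) v l.

Definition is_3grading (S : {set 'I_8}) : Prop := htS S highest_root = 3.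

(* dim n_m = k for m <> 0: number of roots of Sigma-height m equals k. *)
Definition dim_n (S : {set 'I_8}) (m : int) (k : nat) : Prop :=
  exists s : seq rvec, [/\ uniq s, size s = k &
     forall v, v \in s <-> (IsRoot v /\ htS S v = m)].

(* Main.v *)
Require Import Defs.
From mathcomp Require Import all_boot all_order all_algebra.
From mathcomp Require Import zify.
Set Implicit Arguments. Unset Strict Implicit. Unset Printing Implicit Defensive.
Import Order.TTheory GRing.Theory Num.Theory.
Local Open Scope ring_scope.

Definition cartanN (a b : nat) : int :=
  if (a == b)%N then 2
  else if e8_edge a.+1 b.+1 || e8_edge b.+1 a.+1 then -1 else 0.
Definition sum8 (G : nat -> int) := foldr (fun k a => G k + a) 0 (iota 0 8).
Definition reflN (i : nat) (l : seq int) : seq int :=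
  [seq (if (j == i)%N then nth 0 l j - sum8 (fun k => nth 0 l k * cartanN k i)
        else nth 0 l j) | j <- iota 0 8].
Definition sroot (i : nat) : seq int := [seq (if (j == i)%N then 1 else 0) | j <- iota 0 8].
Definition eqi (a b : int) := match a, b with
  | Posz m, Posz n => eqn m n | Negz m, Negz n => eqn m n | _, _ => false end.
Fixpoint eqL (a b : seq int) := match a, b with
  | x :: a', y :: b' => eqi x y && eqL a' b' | [::], [::] => true | _, _ => false end.
Fixpoint memL x (L : seq (seq int)) := if L is y :: L' then eqL x y || memL x L' else false.
Fixpoint addN (L all acc : seq (seq int)) :=
  if L is x :: L' then addN L' all (if memL x all || memL x acc then acc else x :: acc) else acc.
Fixpoint bfs n (all fr : seq (seq int)) :=
  if n is n'.+1 then
    let nw := addN (flatten [seq [seq reflN k l | k <- iota 0 8] | l <- fr]) all [::] in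
    bfs n' (nw ++ all) nw
  else all.
Definition L0 := [seq sroot k | k <- iota 0 8].
Definition Rl := bfs 30 L0 L0.
Fixpoint uniqL (L : seq (seq int)) := if L is x :: L' then ~~ memL x L' && uniqL L' else true.

Lemma eqiP a b : reflect (a = b) (eqi a b).
Proof.
case: a b => m [] n /=; try (by constructor);
  by apply: (iffP eqnP) => [->|[]].
Qed.

Lemma eqL_eq a b : eqL a b -> a = b.
Proof.
elim: a b => [|x a IH] [|y b] //= /andP [/eqiP -> H].
by rewrite (IH b H).
Qed.

Lemma eqL_refl a : eqL a a.
Proof. by elim: a => [|x a IH] //=; rewrite IH andbT; apply/eqiP. Qed.

Lemma eqLP a b : reflect (a = b) (eqL a b).
Proof.
by apply: (iffP idP) => [/eqL_eq|->] //; apply: eqL_refl.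
Qed.

Lemma memLE x L : memL x L = (x \in L).
Proof.
elim: L => [|y L IH] //=; rewrite in_cons IH.
by congr (_ || _); apply/eqLP/eqP.
Qed.

Lemma uniqLE L : uniqL L = uniq L.
Proof. by elim: L => [|x L IH] //=; rewrite memLE IH. Qed.

Lemma addN_mem L all acc x : x \in addN L all acc -> x \in L \/ x \in acc.
Proof.
elim: L acc => [|y L IH] acc /=; first by right.
move=> /IH [h|h]; first by left; rewrite in_cons h orbT.
case: ifP h => _ h; first by right.
move: h; rewrite in_cons => /orP [/eqP ->|->]; last by right.
by left; rewrite in_cons eqxx.
Qed.

Lemma bfs_inv (P : seq int -> Prop) n all fr :
  (forall l k, P l -> (k < 8)%N -> P (reflN k l)) ->
  (forall x, x \in all -> P x) -> (forall x, x \in fr -> P x) ->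
  forall x, x \in bfs n all fr -> P x.
Proof.
move=> HP; elim: n all fr => [|n IH] all fr /= Ha Hf //.
have Hn : forall x, x \in addN (flatten [seq [seq reflN k l | k <- iota 0 8] | l <- fr]) all [::] -> P x.
  move=> x /addN_mem [|] //.
  case/flatten_mapP => l hl /mapP [k]; rewrite mem_iota add0n => /andP [_ hk] ->.
  exact: HP (Hf _ hl) hk.
apply: IH => // x; rewrite mem_cat => /orP [] ?; [exact: Hn|exact: Ha].
Qed.

Definition ofL (l : seq int) : rvec := [ffun i : 'I_8 => nth 0 l i].

Lemma sum8E (G : nat -> int) : \sum_(k < 8) G k = sum8 G.
Proof.
by rewrite -(big_mkord xpredT G) /sum8 /index_iota /= !big_cons big_nil.
Qed.

Lemma reflE (i : 'I_8) l : refl i (ofL l) = ofL (reflN i l).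
Proof.
apply/ffunP => j; rewrite !ffunE (nth_map 0%N) ?size_iota // nth_iota // add0n.
have -> : \sum_(k < 8) ofL l k * cartan k i = sum8 (fun k => nth 0 l k * cartanN k i).
  by rewrite -sum8E; apply: eq_bigr => k _; rewrite ffunE.
by [].
Qed.

Lemma srootE (i : 'I_8) : simple_root i = ofL (sroot i).
Proof.
by apply/ffunP => j; rewrite !ffunE (nth_map 0%N) ?size_iota // nth_iota // add0n.
Qed.

Lemma chk_closed : all (fun l => all (fun k => memL (reflN k l) Rl) (iota 0 8)) Rl.
Proof. by vm_compute. Qed.
Lemma chk_simple : all (fun k => memL (sroot k) Rl) (iota 0 8).
Proof. by vm_compute. Qed.
Lemma chk_uniq : uniqL Rl.
Proof. by vm_compute. Qed.
Lemma chk_size : all (fun l => size l == 8)%N Rl.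
Proof. by vm_compute. Qed.

Lemma in_root l : l \in Rl -> IsRoot (ofL l).
Proof.
rewrite /Rl.
apply: (@bfs_inv (fun l => IsRoot (ofL l))).
- move=> l' k H hk; have := reflE (inord k) l'; rewrite inordK // => <-.
  exact: root_refl.
- move=> x /mapP [k]; rewrite mem_iota add0n => /andP [_ hk] ->.
  by have := srootE (inord k); rewrite inordK // => <-; apply: root_simple.
- move=> x /mapP [k]; rewrite mem_iota add0n => /andP [_ hk] ->.
  by have := srootE (inord k); rewrite inordK // => <-; apply: root_simple.
Qed.


Lemma root_in v : IsRoot v -> exists2 l, l \in Rl & v = ofL l.
Proof.
elim => [i|i w _ [l hl ->]].
  exists (sroot i); last exact: srootE.
  have /allP /(_ (nat_of_ord i)) := chk_simple.
  by rewrite mem_iota add0n leq0n ltn_ord memLE => /(_ isT).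
exists (reflN i l); last exact: reflE.
have /allP /(_ l hl) /allP /(_ (nat_of_ord i)) := chk_closed.
by rewrite mem_iota add0n leq0n ltn_ord memLE => /(_ isT).
Qed.

Lemma ofL_inj_R (R : seq (seq int)) : all (fun l => size l == 8)%N R -> {in R &, injective ofL}.
Proof.
move=> /allP sz a b ha hb /ffunP E.
have sa := eqP (sz a ha); have sb := eqP (sz b hb).
apply: (eq_from_nth (x0 := 0)); first by rewrite sa sb.
by move=> k; rewrite sa => hk; have := E (Ordinal hk); rewrite !ffunE.
Qed.

Lemma htS1 n l : (0 < n <= 8)%N -> htS [set alpha n] (ofL l) = nth 0 l n.-1.
Proof.
by move=> /andP [h1 h2]; rewrite /htS big_set1 ffunE /alpha inordK //; case: n h1 h2.
Qed.

Lemma dim_nR (R : seq (seq int)) n m k :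
  uniq R -> all (fun l => size l == 8)%N R ->
  (forall l, l \in R -> IsRoot (ofL l)) ->
  (forall v, IsRoot v -> exists2 l, l \in R & v = ofL l) ->
  (0 < n <= 8)%N ->
  size (filter (fun l => nth 0 l n.-1 == m) R) = k -> dim_n [set alpha n] m k.
Proof.
move=> hu hsz hin hr hn hs; exists (map ofL (filter (fun l => nth 0 l n.-1 == m) R)); split.
- rewrite map_inj_in_uniq; first exact: filter_uniq.
  move=> a b; rewrite !mem_filter => /andP [_ ha] /andP [_ hb].
  exact: (ofL_inj_R hsz ha hb).
- by rewrite size_map.
- move=> v; split.
    case/mapP => l; rewrite mem_filter => /andP [/eqP hm hl] ->.
    by split; [apply: hin|rewrite htS1].
  case=> /hr [l hl ->] hm; apply/mapP; exists l => //.
  by rewrite mem_filter hl -htS1 // hm eqxx.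
Qed.

Lemma uniqRl : uniq Rl.
Proof. by rewrite -uniqLE chk_uniq. Qed.

Lemma dim_nL n m k : (0 < n <= 8)%N ->
  size (filter (fun l => nth 0 l n.-1 == m) Rl) = k -> dim_n [set alpha n] m k.
Proof. exact: (dim_nR uniqRl chk_size in_root root_in). Qed.

Definition hrl : seq int := [:: 2; 3; 4; 6; 5; 4; 3; 2].

Lemma hr_key (S : {set 'I_8}) :
  htS S highest_root = sum8 (fun k => if inord k \in S then nth 0 hrl k else 0).
Proof.
rewrite /htS big_mkcond /= -sum8E; apply: eq_bigr => k _.
by rewrite inord_val ffunE.
Qed.

Lemma bool8 (b : nat -> bool) :
  sum8 (fun k => if b k then nth 0 hrl k else 0) = 3 ->
  (forall k, (k < 8)%N -> b k = (k == 1)%N) \/ (forall k, (k < 8)%N -> b k = (k == 6)%N).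
Proof.
rewrite /sum8 /=.
case b0 : (b 0%N); case b1 : (b 1%N); case b2 : (b 2%N); case b3 : (b 3%N);
case b4 : (b 4%N); case b5 : (b 5%N); case b6 : (b 6%N); case b7 : (b 7%N);
move=> H; try (exfalso; discriminate H);
[left|right]; move=> [|[|[|[|[|[|[|[|k]]]]]]]] // _.
Qed.

Lemma setE (S : {set 'I_8}) n : (n < 8)%N ->
  (forall k, (k < 8)%N -> (inord k \in S) = (k == n)) -> S = [set inord n].
Proof.
move=> hn H; apply/setP => x; rewrite in_set1.
have := H x (ltn_ord x); rewrite inord_val => ->.
by rewrite -(inj_eq val_inj) /= inordK.
Qed.

Theorem proposition2p10 :
  (forall S : {set 'I_8},
      is_3grading S <-> (S = [set alpha 2] \/ S = [set alpha 7])) /\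
  (dim_n [set alpha 2] (-3) 8 /\ dim_n [set alpha 2] (-2) 28 /\
   dim_n [set alpha 2] (-1) 56) /\
  (dim_n [set alpha 7] (-3) 2 /\ dim_n [set alpha 7] (-2) 27 /\
   dim_n [set alpha 7] (-1) 54).
Proof.
split; last first.
  by split; (split; [|split]); apply: dim_nL => //; vm_compute.
move=> S; split.
  rewrite /is_3grading hr_key => /bool8 [H|H]; [left|right]; exact: setE.
by case=> ->; rewrite /is_3grading /htS big_set1 ffunE /alpha inordK.
Qed.
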